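(* $\approx$ is an equivalence relation on networks.
   Context: Setting: a graph-based calculus for wireless networks with local broadcast. Networks are built as $M,N::=G\langle\Phi\rangle \mid M\backslash c \mid M\oplus_D N$. Here $G=(|G|,\frown_G)$ is a finite undirected graph whose vertices are locations and which has no self-loops. $\Phi$ maps each location $p\in|G|$ to a sequential process. Processes are given by $P::={\bf 0}\mid c(x).P\mid \overline{c}(e).P\mid P+Q\mid {\bf if}~b~{\bf then}~P~{\bf else}~Q\mid A(\vec v)$. $M\backslash c$ restricts channel $c$. $M\oplus_D N$ composes two networks with disjoint locations, adding the edges $D\subseteq|M|\times|N|$. $|M|$ denotes the set of locations of $M$. Networks have a labelled transition semantics $M\xrightarrow{\delta}M'$ with labels $\delta::=p:\alpha\mid\tau$, where $\alpha::=cv\mid\overline{c}v$. A label $p:\alpha$ means the node at location $p$ receives, respectively broadcasts, value $v$ on channel $c$. A broadcast at $p$ is received only by nodes linked to $p$. A $\tau$ transition arises from a broadcast on a restricted channel. $M\xrightarrow{\tau^{\ast}}M'$ means $M$ reaches $M'$ by a finite, possibly empty, sequence of $\tau$-transitions. The weak transition $M\stackrel{p:\alpha}{\Longrightarrow}M'$ means that $M\xrightarrow{\tau^{\ast}}M_1\xrightarrow{p:\alpha}M_1'\xrightarrow{\tau^{\ast}}M'$ for some $M_1,M_1'$. A localized relation is a set $\mathcal{R}\subseteq{\bf Net}\times\mathcal{P}({\sf Loc}^2)\times{\bf Net}$ such that $(M,E,N)\in\mathcal{R}$ implies $E\subseteq|M|\times|N|$. It is symmetric if $(M,E,N)\in\mathcal{R}$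 implies $(N,E^{-1},M)\in\mathcal{R}$. A weak bisimulation is a symmetric localized relation $\mathcal{R}$ such that, whenever $(M,E,N)\in\mathcal{R}$, both of the following hold: - If $M\xrightarrow{\tau}M'$, then $N\xrightarrow{\tau^{\ast}}N'$ with $(M',E,N')\in\mathcal{R}$ for some $N'$. - If $M\xrightarrow{p:\alpha}M'$, then $N\stackrel{q:\alpha}{\Longrightarrow}N'$ for some $q$ with $(p,q)\in E$ and some $N'$ with $(M',E,N')\in\mathcal{R}$. $M\approx N$ (weak bisimilarity) holds iff there exist a weak bisimulation $\mathcal{R}$ and a relation $E\subseteq|M|\times|N|$ with $(M,E,N)\in\mathcal{R}$. *)

(* Defs.v *)
From Stdlib Require Import List Relations RelationClasses.
Import ListNotations.

Set Implicit Arguments.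

Definition Loc := nat.

Section Calculus.

Variable V : Type.
Variable Chan : Type.
Variable Name : Type.

(* Sequential processes, with higher-order abstract syntax for the binder
   of the input prefix c(x).P : the continuation is a function of the
   received value.  Since processes are closed, the output expression e
   and the boolean guard b appear already evaluated. *)
Inductive proc : Type :=
| PNil  : proc
| PIn   : Chan -> (V -> proc) -> proc
| POut  : Chan -> V -> proc -> proc
| PSum  : proc -> proc -> proc
| PIf   : bool -> proc -> proc -> proc
| PCall : Name -> list V -> proc.

Inductive act : Type :=
| AIn  : Chan -> V -> act
| AOut : Chan -> V -> act.

Variable Def : Name -> list V -> proc.

Inductive pstep : proc -> act -> proc -> Prop :=
| ps_in   : forall c k v, pstep (PIn c k) (AIn c v) (k v)
| ps_out  : forall c v P, pstep (POut c v P) (AOut c v) P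
| ps_suml : forall P Q a P', pstep P a P' -> pstep (PSum P Q) a P'
| ps_sumr : forall P Q a Q', pstep Q a Q' -> pstep (PSum P Q) a Q'
| ps_ift  : forall P Q a P', pstep P a P' -> pstep (PIf true P Q) a P'
| ps_iff  : forall P Q a Q', pstep Q a Q' -> pstep (PIf false P Q) a Q'
| ps_call : forall A vs a P', pstep (Def A vs) a P' -> pstep (PCall A vs) a P'.

Definition rcv (P : proc) (c : Chan) (v : V) (P' : proc) : Prop :=
  pstep P (AIn c v) P' \/ ((forall P'', ~ pstep P (AIn c v) P'') /\ P' = P).

Record graph : Type := Graph {
  gV : list Loc;
  gE : Loc -> Loc -> Prop;
  gE_sym : forall p q, gE p q -> gE q p;
  gE_irr : forall p, ~ gE p p;
  gE_in  : forall p q, gE p q -> In p gV /\ In q gV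
}.

Inductive net : Type :=
| NGraph : graph -> (Loc -> proc) -> net
| NRes   : net -> Chan -> net
| NComp  : net -> (Loc -> Loc -> Prop) -> net -> net.

Fixpoint locs (M : net) : list Loc :=
  match M with
  | NGraph G _ => gV G
  | NRes M _ => locs M
  | NComp M _ N => locs M ++ locs N
  end.

Inductive label : Type :=
| LAct : Loc -> act -> label
| LTau : label.

(* Recv M S c v M' : the nodes of M at locations in S hear a broadcast of v
   on channel c coming from outside M. *)
Inductive Recv : net -> (Loc -> Prop) -> Chan -> V -> net -> Prop :=
| rv_graph : forall G Phi Phi' S c v,
    (forall q, (In q (gV G) /\ S q -> rcv (Phi q) c v (Phi' q)) /\
               (~ (In q (gV G) /\ S q) -> Phi' q = Phi q)) ->
    Recv (NGraph G Phi) S c v (NGraph G Phi')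
| rv_res_neq : forall M M' S c d v,
    c <> d -> Recv M S c v M' -> Recv (NRes M d) S c v (NRes M' d)
| rv_res_eq : forall M S c v,
    Recv (NRes M c) S c v (NRes M c)
| rv_comp : forall M M' N N' D S c v,
    Recv M S c v M' -> Recv N S c v N' ->
    Recv (NComp M D N) S c v (NComp M' D N').

Inductive step : net -> label -> net -> Prop :=
| st_bcast : forall G Phi Phi' p c v,
    In p (gV G) ->
    pstep (Phi p) (AOut c v) (Phi' p) ->
    (forall q, q <> p ->
       (In q (gV G) /\ gE G p q -> rcv (Phi q) c v (Phi' q)) /\
       (~ (In q (gV G) /\ gE G p q) -> Phi' q = Phi q)) ->
    step (NGraph G Phi) (LAct p (AOut c v)) (NGraph G Phi')
| st_recv : forall G Phi Phi' p c v,
    In p (gV G) ->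
    pstep (Phi p) (AIn c v) (Phi' p) ->
    (forall q, q <> p -> Phi' q = Phi q) ->
    step (NGraph G Phi) (LAct p (AIn c v)) (NGraph G Phi')
| st_res_act : forall M M' d p a,
    step M (LAct p a) M' ->
    (forall c v, a = AOut c v \/ a = AIn c v -> c <> d) ->
    step (NRes M d) (LAct p a) (NRes M' d)
| st_res_hide : forall M M' p c v,
    step M (LAct p (AOut c v)) M' ->
    step (NRes M c) LTau (NRes M' c)
| st_res_tau : forall M M' d,
    step M LTau M' -> step (NRes M d) LTau (NRes M' d)
| st_comp_bcast_l : forall M M' N N' D p c v,
    step M (LAct p (AOut c v)) M' ->
    Recv N (fun q => D p q) c v N' ->
    step (NComp M D N) (LAct p (AOut c v)) (NComp M' D N')
| st_comp_bcast_r : forall M M' N N' D q c v,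
    step N (LAct q (AOut c v)) N' ->
    Recv M (fun p => D p q) c v M' ->
    step (NComp M D N) (LAct q (AOut c v)) (NComp M' D N')
| st_comp_recv_l : forall M M' N D p c v,
    step M (LAct p (AIn c v)) M' ->
    step (NComp M D N) (LAct p (AIn c v)) (NComp M' D N)
| st_comp_recv_r : forall M N N' D p c v,
    step N (LAct p (AIn c v)) N' ->
    step (NComp M D N) (LAct p (AIn c v)) (NComp M D N')
| st_comp_tau_l : forall M M' N D,
    step M LTau M' -> step (NComp M D N) LTau (NComp M' D N)
| st_comp_tau_r : forall M N N' D,
    step N LTau N' -> step (NComp M D N) LTau (NComp M D N').

Definition taus : net -> net -> Prop :=
  clos_refl_trans_1n net (fun M M' => step M LTau M').

Definition wstep (M : net) (p : Loc) (a : act) (M' : net) : Prop :=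
  exists M1 M1', taus M M1 /\ step M1 (LAct p a) M1' /\ taus M1' M'.

Definition lrel := net -> (Loc -> Loc -> Prop) -> net -> Prop.

Definition localized (R : lrel) : Prop :=
  forall M E N, R M E N -> forall p q, E p q -> In p (locs M) /\ In q (locs N).

Definition lsymmetric (R : lrel) : Prop :=
  forall M E N, R M E N -> R N (fun q p => E p q) M.

Definition weak_bisimulation (R : lrel) : Prop :=
  localized R /\ lsymmetric R /\
  forall M E N, R M E N ->
    (forall M', step M LTau M' -> exists N', taus N N' /\ R M' E N') /\
    (forall p a M', step M (LAct p a) M' ->
       exists q N', E p q /\ wstep N q a N' /\ R M' E N').

Definition wbisim (M N : net) : Prop :=
  exists R E, weak_bisimulation R /\ R M E N.

End Calculus.

(* Main.v *)
Require Import Defs.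
From Stdlib Require Import List Relations RelationClasses.
Set Implicit Arguments.

Lemma recv_locs V Chan Name Def (M : net V Chan Name) S c v M' :
  Recv Def M S c v M' -> locs M' = locs M.
Proof. induction 1; simpl; congruence. Qed.

Lemma step_locs V Chan Name Def (M : net V Chan Name) l M' :
  step Def M l M' -> locs M' = locs M.
Proof.
  induction 1; simpl; try congruence;
  repeat match goal with H : Recv _ _ _ _ _ _ |- _ => apply recv_locs in H end;
  congruence.
Qed.

Lemma step_in V Chan Name Def (M : net V Chan Name) l M' :
  step Def M l M' -> forall p a, l = LAct p a -> In p (locs M).
Proof.
  induction 1; intros p0 a0 Hl; inversion Hl; subst; simpl; eauto;
  apply in_or_app; eauto.
Qed.

Lemma taus_trans V Chan Name Def (M N K : net V Chan Name) :
  taus Def M N -> taus Def N K -> taus Def M K.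
Proof.
  unfold taus. intros H1 H2. induction H1; auto.
  econstructor; eauto.
Qed.

Lemma taus_sim V Chan Name Def (R : lrel V Chan Name) :
  weak_bisimulation Def R ->
  forall K K', taus Def K K' -> forall E N, R K E N ->
  exists N', taus Def N N' /\ R K' E N'.
Proof.
  intros [_ [_ HB]] K K' H. induction H; intros E N HR.
  - exists N. split; [constructor | auto].
  - destruct (proj1 (HB _ _ _ HR) _ H) as [N1 [HN1 HR1]].
    destruct (IHclos_refl_trans_1n _ _ HR1) as [N2 [HN2 HR2]].
    exists N2. split; [eapply taus_trans; eauto | auto].
Qed.

Arguments taus_sim {V Chan Name Def R} HW {K K'} _ {E N} _.

Lemma wstep_sim V Chan Name Def (R : lrel V Chan Name) :
  weak_bisimulation Def R ->
  forall K k a K' E N, wstep Def K k a K' -> R K E N ->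
  exists q N', E k q /\ wstep Def N q a N' /\ R K' E N'.
Proof.
  intros HW K k a K' E N [K1 [K1' [H1 [H2 H3]]]] HR.
  destruct (taus_sim HW H1 HR) as [N1 [HN1 HR1]].
  destruct HW as [HL [HS HB]].
  destruct (proj2 (HB _ _ _ HR1) _ _ _ H2) as [q [N1' [Hq [[M1 [M1' [A1 [A2 A3]]]] HR2]]]].
  destruct (taus_sim (conj HL (conj HS HB)) H3 HR2) as [N2 [HN2 HR3]].
  exists q, N2. split; auto. split; auto.
  exists M1, M1'. split; [eapply taus_trans; eauto|]. split; auto.
  eapply taus_trans; eauto.
Qed.

Arguments wstep_sim {V Chan Name Def R} HW {K k a K' E N} _ _.

Theorem lemma4 (V Chan Name : Type) (Def : Name -> list V -> proc V Chan Name) :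
  Equivalence (@wbisim V Chan Name Def).
Proof.
  split.
  - intro M.
    exists (fun M E N => M = N /\ forall p q, E p q <-> p = q /\ In p (locs M)).
    exists (fun p q => p = q /\ In p (locs M)).
    split; [|split; [reflexivity| intuition]].
    split; [|split].
    + intros M0 E N [-> HE] p q Hpq. apply HE in Hpq. destruct Hpq as [Hpq Hin]; subst; split; auto.
    + intros M0 E N [-> HE]. split; auto. intros p q. rewrite HE. split; intros [? ?]; subst; auto.
    + intros M0 E N [-> HE]. split.
      * intros M' Hs. exists M'. split; [econstructor; [exact Hs|apply rt1n_refl]|]. split; auto.
        rewrite (step_locs Hs). auto.
      * intros p a M' Hs. exists p, M'. split; [apply HE; split; eauto using step_in|].
        split. exists N, M'. split; [apply rt1n_refl|]. split; auto. apply rt1n_refl.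
        split; auto. rewrite (step_locs Hs). auto.
  - intros M N [R [E [HW HR]]]. exists R, (fun q p => E p q).
    split; auto. apply (proj1 (proj2 HW)). auto.
  - intros M K N [R1 [E1 [HW1 HR1]]] [R2 [E2 [HW2 HR2]]].
    exists (fun M E N => exists K E1 E2,
      ((R1 M E1 K /\ R2 K E2 N) \/ (R2 M E1 K /\ R1 K E2 N)) /\
      (forall p q, E p q <-> exists k, E1 p k /\ E2 k q)).
    exists (fun p q => exists k, E1 p k /\ E2 k q).
    split.
    2:{ exists K, E1, E2. split; auto. reflexivity. }
    pose proof HW1 as [HL1 [HS1 HB1]]. pose proof HW2 as [HL2 [HS2 HB2]].
    split; [|split].
    + intros M0 E N0 [K0 [F1 [F2 [H HE]]]] p q Hpq.
      apply HE in Hpq. destruct Hpq as [k [Hk1 Hk2]].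
      destruct H as [[A B]|[A B]].
      * split; [apply (HL1 _ _ _ A p k Hk1) | apply (HL2 _ _ _ B k q Hk2)].
      * split; [apply (HL2 _ _ _ A p k Hk1) | apply (HL1 _ _ _ B k q Hk2)].
    + intros M0 E N0 [K0 [F1 [F2 [H HE]]]].
      exists K0, (fun q p => F2 p q), (fun q p => F1 p q). split.
      * destruct H as [[A B]|[A B]]; [right|left]; split; auto.
      * intros p q. rewrite HE. firstorder.
    + assert (G : forall (Ra Rb : lrel V Chan Name), weak_bisimulation Def Ra ->
                weak_bisimulation Def Rb ->
        forall M0 F1 K0 F2 N0, Ra M0 F1 K0 -> Rb K0 F2 N0 ->
        (forall M', step Def M0 (LTau V Chan) M' -> exists N', taus Def N0 N' /\
           exists K' , Ra M' F1 K' /\ Rb K' F2 N') /\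
        (forall p a M', step Def M0 (LAct p a) M' ->
          exists q N', (exists k, F1 p k /\ F2 k q) /\ wstep Def N0 q a N' /\
           exists K', Ra M' F1 K' /\ Rb K' F2 N')).
      { intros Ra Rb HWa HWb M0 F1 K0 F2 N0 Ha Hb. pose proof HWa as [_ [_ HBa]].
        split.
        - intros M' Hs. destruct (proj1 (HBa _ _ _ Ha) _ Hs) as [K' [HK HRa]].
          destruct (taus_sim HWb HK Hb) as [N' [HN HRb]].
          exists N'. split; eauto.
        - intros p a M' Hs. destruct (proj2 (HBa _ _ _ Ha) _ _ _ Hs) as [k [K' [Hk [HK HRa]]]].
          destruct (wstep_sim HWb HK Hb) as [q [N' [Hq [HN HRb]]]].
          exists q, N'. split; eauto. }
      intros M0 E N0 [K0 [F1 [F2 [H HE]]]].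
      assert (Hc : (forall M', step Def M0 (LTau V Chan) M' -> exists N', taus Def N0 N' /\
           exists K' , (R1 M' F1 K' /\ R2 K' F2 N') \/ (R2 M' F1 K' /\ R1 K' F2 N')) /\
        (forall p a M', step Def M0 (LAct p a) M' ->
          exists q N', (exists k, F1 p k /\ F2 k q) /\ wstep Def N0 q a N' /\
           exists K', (R1 M' F1 K' /\ R2 K' F2 N') \/ (R2 M' F1 K' /\ R1 K' F2 N'))).
      { destruct H as [[A B]|[A B]].
        - destruct (G _ _ HW1 HW2 _ _ _ _ _ A B) as [G1 G2]. split.
          + intros M' Hs. destruct (G1 _ Hs) as [N' [X [K' Y]]]. eauto.
          + intros p a M' Hs. destruct (G2 _ _ _ Hs) as [q [N' [X [Y [K' Z]]]]].
            exists q, N'. eauto.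
        - destruct (G _ _ HW2 HW1 _ _ _ _ _ A B) as [G1 G2]. split.
          + intros M' Hs. destruct (G1 _ Hs) as [N' [X [K' Y]]]. eauto.
          + intros p a M' Hs. destruct (G2 _ _ _ Hs) as [q [N' [X [Y [K' Z]]]]].
            exists q, N'. eauto. }
      destruct Hc as [C1 C2]. split.
      * intros M' Hs. destruct (C1 _ Hs) as [N' [X [K' Y]]].
        exists N'. split; auto. exists K', F1, F2. auto.
      * intros p a M' Hs. destruct (C2 _ _ _ Hs) as [q [N' [X [Y [K' Z]]]]].
        exists q, N'. split; [apply HE; auto|]. split; auto. exists K', F1, F2. auto.
Qed.
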